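(* Let $q$ be a power of a prime with $q>2$. Then there is a right conjugacy closed loop of order $q^2-1$ whose right multiplication group is isomorphic to $\mathrm{GL}(2,q)$.
   Context: For a finite loop $\mathcal{L}$ the right multiplication group is the permutation group generated by the maps $R_a\colon x\mapsto xa$, $a\in\mathcal{L}$. The loop is right conjugacy closed if $\{R_a\mid a\in\mathcal{L}\}$ is closed under conjugation by its own elements. *)

(* Defs.v *)
From HB Require Import structures.
From mathcomp Require Import all_boot all_order all_algebra all_fingroup all_field.
Set Implicit Arguments. Unset Strict Implicit. Unset Printing Implicit Defensive.

Definition is_loop (T : finType) (mul : T -> T -> T) (e : T) : Prop :=
  (forall x, mul e x = x) /\ (forall x, mul x e = x) /\
  (forall a, injective (mul a)) /\ (forall a, injective (fun x => mul x a)).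

Definition rmult_set (T : finType) (mul : T -> T -> T) : {set {perm T}} :=
  [set s : {perm T} | [exists a : T, [forall x : T, s x == mul x a]]].

Definition rmult_group (T : finType) (mul : T -> T -> T) : {group {perm T}} :=
  <<rmult_set mul>>%G.

Definition rcc (T : finType) (mul : T -> T -> T) : Prop :=
  forall s t, s \in rmult_set mul -> t \in rmult_set mul ->
    (s ^ t)%g \in rmult_set mul.

(* Main.v *)
Require Import Defs.
From HB Require Import structures.
From mathcomp Require Import all_boot all_order all_algebra all_fingroup all_field.
From mathcomp Require Import all_solvable ring.
Set Implicit Arguments. Unset Strict Implicit. Unset Printing Implicit Defensive.
Import GRing.Theory.

Module Aux.
Local Open Scope ring_scope.
Section M2.
Variable F : fieldType.

Lemma big_ord2 (f : 'I_2 -> F) : \sum_(i < 2) f i = f ord0 + f ord_max.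
Proof. by rewrite big_ord_recl big_ord1; congr (_ + f _); apply: val_inj. Qed.

Definition mk2 (a b c d : F) : 'M[F]_2 :=
  \matrix_(i, j) if i == ord0 then (if j == ord0 then a else b)
                 else (if j == ord0 then c else d).

Lemma ord2P (i : 'I_2) : i = ord0 \/ i = ord_max.
Proof. by case: i => [[|[|//]]] ? ; [left|right]; apply: val_inj. Qed.

Lemma mk2E (A : 'M[F]_2) : A = mk2 (A ord0 ord0) (A ord0 ord_max) (A ord_max ord0) (A ord_max ord_max).
Proof. by apply/matrixP => i j; rewrite mxE; case: (ord2P i) => ->; case: (ord2P j) => ->. Qed.

Lemma mk2_mul a b c d a' b' c' d' :
  mk2 a b c d *m mk2 a' b' c' d' = mk2 (a*a' + b*c') (a*b'+b*d') (c*a'+d*c') (c*b'+d*d').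
Proof.
by apply/matrixP => i j; rewrite !mxE big_ord2 !mxE; case: (ord2P i) => ->; case: (ord2P j) => ->.
Qed.

Lemma mk2_det a b c d : \det (mk2 a b c d) = a * d - b * c.
Proof.
rewrite (expand_det_row _ ord0) big_ord2 /cofactor !det_mx11 !mxE /=.
by rewrite /= expr0 expr1; ring.
Qed.

Lemma mk2_tr a b c d : \tr (mk2 a b c d) = a + d.
Proof. by rewrite /mxtrace big_ord2 !mxE. Qed.

Lemma mk2_eq a b c d a' b' c' d' : a = a' -> b = b' -> c = c' -> d = d' -> mk2 a b c d = mk2 a' b' c' d'.
Proof. by move=> -> -> -> ->. Qed.

Lemma mk2_scalar a : a%:M = mk2 a 0 0 a.
Proof. by apply/matrixP => i j; rewrite !mxE; case: (ord2P i) => ->; case: (ord2P j) => ->. Qed.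

Lemma mk2_1 : 1%:M = mk2 1 0 0 1 :> 'M[F]_2.
Proof. exact: mk2_scalar. Qed.

Definition rv2 (x y : F) : 'rV[F]_2 := \row_j (if j == ord0 then x else y).
Lemma rv2E (v : 'rV[F]_2) : v = rv2 (v ord0 ord0) (v ord0 ord_max).
Proof. by apply/rowP => j; rewrite mxE; case: (ord2P j) => ->. Qed.
Lemma rv2_mul x y a b c d : rv2 x y *m mk2 a b c d = rv2 (x*a + y*c) (x*b+y*d).
Proof. by apply/rowP => j; rewrite !mxE big_ord2 !mxE; case: (ord2P j) => ->. Qed.
End M2.

Section Loop.
Variable F : finFieldType.
Variables (bt gm : F).
Hypothesis hirr : forall x : F, x * x - bt * x + gm != 0.

Lemma gm_neq0 : gm != 0.
Proof. by have := hirr 0; rewrite !mul0r mulr0 subr0 add0r. Qed.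

Definition inS (A : 'M[F]_2) : bool :=
  is_scalar_mx A || ((\tr A == bt) && (\det A == gm)).

Definition e1 : 'rV[F]_2 := rv2 1 0.

Definition sigm (a : 'rV[F]_2) : 'M[F]_2 :=
  let a1 := a ord0 ord0 in let a2 := a ord0 ord_max in
  if a2 == 0 then mk2 a1 0 0 a1
  else mk2 a1 a2 ((a1 * (bt - a1) - gm) / a2) (bt - a1).

Lemma rv2_0 (x y : F) : rv2 x y ord0 ord0 = x.
Proof. by rewrite mxE. Qed.
Lemma rv2_1 (x y : F) : rv2 x y ord0 ord_max = y.
Proof. by rewrite mxE. Qed.

Lemma sig_e1 a : e1 *m sigm a = a.
Proof.
rewrite [in RHS](rv2E a) /sigm /e1; case: ifP => [/eqP ->|_]; rewrite rv2_mul;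
 congr rv2; ring.
Qed.

Lemma sig_rv2 x y : sigm (rv2 x y) = if y == 0 then mk2 x 0 0 x
  else mk2 x y ((x * (bt - x) - gm) / y) (bt - x).
Proof. by rewrite /sigm rv2_0 rv2_1. Qed.

Lemma sig_inS a : inS (sigm a).
Proof.
rewrite (rv2E a) sig_rv2 /inS; case: ifP => [_|/negbT y0].
  by rewrite -mk2_scalar scalar_mx_is_scalar.
rewrite mk2_tr mk2_det; apply/orP; right; apply/andP; split; apply/eqP.
  ring.
by field.
Qed.

Lemma sig_unit_rv2 (x y : F) : rv2 x y != 0 -> sigm (rv2 x y) \in unitmx.
Proof.
rewrite sig_rv2.
case: ifP => [/eqP y0|/negbT y0] ha; rewrite unitmxE mk2_det unitfE.
  rewrite mulr0 subr0 mulf_neq0 //; apply: contra ha => /eqP x0;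
  by rewrite x0 y0; apply/eqP/rowP => j; rewrite !mxE; case: ifP.
have -> : x * (bt - x) - y * ((x * (bt - x) - gm) / y) = gm.
  by field.
exact: gm_neq0.
Qed.

Lemma sig_unit a : a != 0 -> sigm a \in unitmx.
Proof. rewrite (rv2E a); exact: sig_unit_rv2. Qed.

Lemma sig_unique_mk2 (a b c d : F) : inS (mk2 a b c d) -> mk2 a b c d = sigm (e1 *m mk2 a b c d).
Proof.
case/orP => [/is_scalar_mxP [l ->]|/andP[/eqP htr /eqP hdet]].
  by rewrite mk2_scalar rv2_mul sig_rv2 !mul1r !mul0r !addr0 eqxx.
move: htr hdet; rewrite mk2_tr mk2_det rv2_mul sig_rv2 !mul1r !mul0r !addr0 => htr hdet.
case: ifP => [/eqP b0|/negbT b0].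
  exfalso; have := hirr a; rewrite -hdet b0 -htr; move/eqP; apply; ring.
apply: mk2_eq => //.
  rewrite -hdet -htr; field => //.
by rewrite -htr; ring.
Qed.

Lemma sig_unique A : inS A -> A = sigm (e1 *m A).
Proof. rewrite (mk2E A); exact: sig_unique_mk2. Qed.


Lemma inS_conj (A g : 'M[F]_2) : g \in unitmx -> inS A -> inS (invmx g *m A *m g).
Proof.
move=> gu; case/orP => [/is_scalar_mxP [l ->]|/andP[/eqP htr /eqP hdet]].
  by rewrite mul_mx_scalar -scalemxAl mulVmx // scale_scalar_mx mulr1 /inS scalar_mx_is_scalar.
apply/orP; right; rewrite mxtrace_mulC mulmxA mulmxV // mul1mx htr eqxx /=.
rewrite !det_mulmx det_inv -hdet; apply/eqP.
have : \det g != 0 by rewrite -unitfE -unitmxE.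
move=> h; field; exact h.
Qed.

Lemma sharp (v : 'rV[F]_2) (A B : 'M[F]_2) : v != 0 -> inS A -> inS B -> v *m A = v *m B -> A = B.
Proof.
move=> v0 hA hB hv.
pose g := sigm v; have gu : g \in unitmx by exact: sig_unit.
have ge : e1 *m g = v by exact: sig_e1.
have giu : invmx g \in unitmx by rewrite unitmx_inv.
have hA' := inS_conj giu hA; have hB' := inS_conj giu hB.
rewrite invmxK in hA' hB'.
have : g *m A *m invmx g = g *m B *m invmx g.
  rewrite (sig_unique hA') (sig_unique hB') !mulmxA ge hv //.
move/(congr1 (fun M => invmx g *m M *m g)).
by rewrite !mulmxA !mulVmx // !mul1mx -!mulmxA !mulVmx // !mulmx1.
Qed.

End Loop.

Section Gen.
Variable F : finFieldType.
Variables (bt gm : F).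
Hypothesis hirr : forall x : F, x * x - bt * x + gm != 0.
Variable H : {group {'GL_2[F]}}.
Hypothesis hS : forall g : {'GL_2[F]}, inS bt gm (GLval g) -> g \in H.
Hypothesis hN : forall g h : {'GL_2[F]}, h \in H -> (h ^ g)%g \in H.

Definition toGL (A : 'M[F]_2) : {'GL_2[F]} := insubd (1%g : {'GL_2[F]}) A.
Lemma toGLK A : A \in unitmx -> GLval (toGL A) = A.
Proof. by move=> hA; rewrite /toGL insubdK. Qed.

Definition inH (A : 'M[F]_2) := A \in unitmx /\ toGL A \in H.

Lemma inH_mul A B : inH A -> inH B -> inH (A *m B).
Proof.
move=> [uA hA] [uB hB]; have uAB : A *m B \in unitmx by rewrite unitmx_mul uA.
split=> //; suff -> : toGL (A *m B) = (toGL A * toGL B)%g by rewrite groupM.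
by apply: val_inj; rewrite /= /toGL !insubdK.
Qed.

Lemma inH_inv A : inH A -> inH (invmx A).
Proof.
move=> [uA hA]; have uA' : invmx A \in unitmx by rewrite unitmx_inv.
split=> //; suff -> : toGL (invmx A) = (toGL A)^-1%g by rewrite groupV.
by apply: val_inj; rewrite /= /toGL !insubdK.
Qed.

Lemma inH_conj A g : inH A -> g \in unitmx -> inH (invmx g *m A *m g).
Proof.
move=> [uA hA] ug.
have u : invmx g *m A *m g \in unitmx by rewrite !unitmx_mul unitmx_inv ug uA.
split=> //; suff -> : toGL (invmx g *m A *m g) = (toGL A ^ toGL g)%g by apply: hN.
apply: val_inj; rewrite /= /toGL !insubdK // -mulmxA; reflexivity.
Qed.

Lemma inH_S A : inS bt gm A -> A \in unitmx -> inH A.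
Proof. by move=> hA uA; split=> //; apply: hS; rewrite toGLK. Qed.

Lemma inv_eq (A B : 'M[F]_2) : A *m B = 1%:M -> invmx A = B.
Proof.
move=> h; have [uA _] := mulmx1_unit h.
by rewrite -[invmx A]mulmx1 -h mulmxA mulVmx // mul1mx.
Qed.


Lemma mk2_unit (a b c d : F) : a*d - b*c != 0 -> mk2 a b c d \in unitmx.
Proof. by rewrite unitmxE mk2_det unitfE. Qed.

Lemma inv_mk2 (a b c d : F) : a*d - b*c != 0 ->
  invmx (mk2 a b c d) = mk2 (d/(a*d-b*c)) (-b/(a*d-b*c)) (-c/(a*d-b*c)) (a/(a*d-b*c)).
Proof.
move=> h; apply: inv_eq; rewrite mk2_mul mk2_1; apply: mk2_eq; field; exact h.
Qed.

Lemma inH_C (A : 'M[F]_2) : \tr A = bt -> \det A = gm -> inH A.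
Proof.
move=> ht hd; apply: inH_S; first by rewrite /inS ht hd !eqxx orbT.
by rewrite unitmxE hd unitfE; exact: gm_neq0 hirr.
Qed.

Lemma Pin (x y : F) : y != 0 ->
  inH (mk2 1 0 ((bt*(1-gm) + x*(gm*gm-1))/y) (gm*gm)).
Proof.
move=> y0; have g0 := gm_neq0 hirr.
have -> : mk2 1 0 ((bt*(1-gm) + x*(gm*gm-1))/y) (gm*gm) =
  mk2 x y ((x*(bt-x) - gm)/y) (bt - x) *m
  mk2 ((bt - x - y*((bt*(1-gm) + x*(gm*gm-1))/y))/gm) (-y*gm)
      ((x*((bt*(1-gm) + x*(gm*gm-1))/y) - (x*(bt-x) - gm)/y)/gm) (x*gm).
  by rewrite mk2_mul; apply: mk2_eq; field; rewrite ?y0 ?g0.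
apply: inH_mul; apply: inH_C; rewrite ?mk2_tr ?mk2_det; field; rewrite ?y0 ?g0 //.
Qed.

Definition Lm (c : F) := mk2 1 0 c 1.
Definition Um (c : F) := mk2 1 c 0 1.

Lemma Ldiff (c1 c2 d : F) : d != 0 ->
  mk2 1 0 c1 d *m invmx (mk2 1 0 c2 d) = Lm (c1 - c2).
Proof.
move=> d0; rewrite inv_mk2; last by rewrite mul0r subr0 mul1r.
rewrite mk2_mul /Lm; apply: mk2_eq; field; exact d0.
Qed.


Hypothesis ht : exists t : F, t != 0 /\ t != 1.
Hypothesis hg1 : gm != 1.
Hypothesis hgen : forall z : F, z != 0 -> exists l : F, z = l * l \/ z = l * l * gm.

Lemma L_some : exists c0 : F, c0 != 0 /\ inH (Lm c0).
Proof.
have g0 := gm_neq0 hirr.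
have gg0 : gm * gm != 0 by rewrite mulf_neq0.
case: (eqVneq (bt * (1 - gm)) 0) => hk.
  have bt0 : bt = 0.
    move/eqP: hk; rewrite mulf_eq0 subr_eq0 => /orP[/eqP //|].
    by rewrite eq_sym (negbTE hg1).
  have h1 := Pin 0 (oner_neq0 F); have h2 := Pin 1 (oner_neq0 F).
  have := inH_mul h1 (inH_inv h2); rewrite Ldiff // => h.
  eexists; split; last exact: h.
  rewrite hk !mul0r !mul1r !add0r !divr1 sub0r oppr_eq0 subr_eq0.
  apply/negP => /eqP hgg.
  have : gm = -1.
    have : (gm - 1) * (gm + 1) = 0 by rewrite mulrDr mulr1 mulrBl mul1r hgg; ring.
    move/eqP; rewrite mulf_eq0 subr_eq0 (negbTE hg1) /= addr_eq0 => /eqP //.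
  move=> gm1; have := hirr 1; rewrite bt0 gm1 mul1r mul0r subr0 subrr eqxx //.
have [t [t0 t1]] := ht.
have h1 := Pin 0 (oner_neq0 F); have h2 := Pin 0 t0.
have := inH_mul h1 (inH_inv h2); rewrite Ldiff // => h.
eexists; split; last exact: h.
rewrite !mul0r !addr0 divr1.
have -> : bt * (1 - gm) - bt * (1 - gm) / t = bt * (1 - gm) * (t - 1) / t by field.
by rewrite mulf_neq0 ?invr_neq0 // mulf_neq0 // subr_eq0.
Qed.

Lemma inH_1 : inH 1%:M.
Proof.
have [c0 [_ h]] := L_some.
have := inH_mul h (inH_inv h); rewrite mulmxV //; by case: h.
Qed.

Lemma L_all c : inH (Lm c).
Proof.
have [c0 [c00 h]] := L_some.
case: (eqVneq c 0) => [->|c0n].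
  by rewrite /Lm -mk2_1; exact: inH_1.
have hd : 1 * (c0 / c) - 0 * 0 != 0 by rewrite mul1r mul0r subr0 mulf_neq0 ?invr_neq0.
have E : invmx (mk2 1 0 0 (c0 / c)) *m Lm c0 *m mk2 1 0 0 (c0 / c) = Lm c.
  rewrite inv_mk2 // /Lm !mk2_mul; apply: mk2_eq; field; by rewrite ?c00 ?c0n.
by rewrite -E; apply: inH_conj h (mk2_unit hd).
Qed.


Lemma U_all c : inH (Um c).
Proof.
have hd : (0:F) * 0 - 1 * 1 != 0 by rewrite mul0r mul1r sub0r oppr_eq0 oner_eq0.
have E : invmx (mk2 0 1 1 0) *m Lm c *m mk2 0 1 1 0 = Um c.
  rewrite inv_mk2 // /Lm /Um !mk2_mul; apply: mk2_eq; field; by rewrite ?oppr_eq0 ?oner_eq0.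
by rewrite -E; apply: inH_conj (L_all c) (mk2_unit hd).
Qed.

Lemma SL_in_b (a b c d : F) : a * d - b * c = 1 -> b != 0 -> inH (mk2 a b c d).
Proof.
move=> h b0.
have hc : c = (a * d - 1) / b by rewrite -h; field.
have -> : mk2 a b c d = Lm ((d-1)/b) *m Um b *m Lm ((a-1)/b).
  rewrite /Lm /Um !mk2_mul hc; apply: mk2_eq; field; by rewrite ?b0.
by apply: inH_mul; [apply: inH_mul|]; [exact: L_all|exact: U_all|exact: L_all].
Qed.

Lemma SL_in (a b c d : F) : a * d - b * c = 1 -> inH (mk2 a b c d).
Proof.
move=> h; case: (eqVneq b 0) => [b0|]; last exact: SL_in_b.
have d0 : d != 0.
  by apply/eqP => d0; move: h; rewrite d0 b0 mulr0 mul0r subr0 => /eqP; rewrite eq_sym oner_eq0.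
have -> : mk2 a b c d = Um (-1) *m (Um 1 *m mk2 a b c d).
  rewrite /Um !mk2_mul b0; apply: mk2_eq; ring.
apply: inH_mul; first exact: U_all.
rewrite /Um mk2_mul; apply: SL_in_b; first by rewrite b0; rewrite b0 mul0r subr0 in h; rewrite -[RHS]h; ring.
by rewrite b0 mul1r add0r mul1r.
Qed.

Lemma det_in z : z != 0 -> exists A, inH A /\ \det A = z.
Proof.
move=> z0; have [l [hl|hl]] := hgen z0.
  have l0 : l != 0 by apply: contra z0 => /eqP l0; rewrite hl l0 mulr0.
  exists (l%:M); split; last by rewrite det_scalar expr2 hl.
  apply: inH_S; first by rewrite /inS scalar_mx_is_scalar.
  by rewrite unitmxE det_scalar unitfE expf_neq0.
have l0 : l != 0 by apply: contra z0 => /eqP l0; rewrite hl l0 mulr0 mul0r.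
exists (l%:M *m mk2 0 1 (-gm) bt); split.
  apply: inH_mul.
    apply: inH_S; first by rewrite /inS scalar_mx_is_scalar.
    by rewrite unitmxE det_scalar unitfE expf_neq0.
  by apply: inH_C; rewrite ?mk2_tr ?mk2_det; ring.
by rewrite det_mulmx det_scalar mk2_det expr2 hl; ring.
Qed.

Lemma all_in (A : 'M[F]_2) : A \in unitmx -> inH A.
Proof.
move=> uA; have dA : \det A != 0 by rewrite -unitfE -unitmxE.
have [B [hB dB]] := det_in dA.
have uB : B \in unitmx by case: hB.
have -> : A = (A *m invmx B) *m B by rewrite mulmxKV.
apply: inH_mul => //.
rewrite (mk2E (A *m invmx B)); apply: SL_in.
rewrite -mk2_det -mk2E det_mulmx det_inv dB divff //.
Qed.

Lemma H_all (g : {'GL_2[F]}) : g \in H.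
Proof.
have [_ h] := all_in (GL_unitmx g).
by move: h; rewrite /toGL valKd.
Qed.

End Gen.

Section Final.
Variable F : finFieldType.
Variables (bt gm : F).
Hypothesis hirr : forall x : F, x * x - bt * x + gm != 0.
Hypothesis ht : exists t : F, t != 0 /\ t != 1.
Hypothesis hg1 : gm != 1.
Hypothesis hgen : forall z : F, z != 0 -> exists l : F, z = l * l \/ z = l * l * gm.

Definition LT := {v : 'rV[F]_2 | v != 0}.

Lemma mul_neq0 (v : 'rV[F]_2) (M : 'M[F]_2) : v != 0 -> M \in unitmx -> v *m M != 0.
Proof.
move=> v0 uM; apply: contra v0 => /eqP h.
by rewrite -(mulmxK uM v) h mul0mx.
Qed.

Definition mulT (x a : LT) : LT := insubd x (val x *m sigm bt gm (val a)).

Lemma val_mulT x a : val (mulT x a) = val x *m sigm bt gm (val a).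
Proof. by rewrite /mulT insubdK //; apply: mul_neq0 (valP x) (sig_unit hirr (valP a)). Qed.

Lemma e1_neq0 : e1 F != 0.
Proof.
apply/eqP => /rowP /(_ ord0); rewrite !mxE /= => /eqP; by rewrite oner_eq0.
Qed.

Definition eT : LT := exist _ (e1 F) e1_neq0.

Lemma sig1 : sigm bt gm (e1 F) = 1%:M.
Proof.
have h : inS bt gm (1%:M : 'M[F]_2) by rewrite /inS scalar_mx_is_scalar.
by rewrite [RHS](sig_unique hirr h) mulmx1.
Qed.

Lemma loopT : is_loop mulT eT.
Proof.
split; [|split; [|split]].
- by move=> x; apply: val_inj; rewrite val_mulT sig_e1.
- by move=> x; apply: val_inj; rewrite val_mulT /= sig1 mulmx1.
- move=> a b c /(congr1 val); rewrite !val_mulT => h.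
  have := sharp hirr (valP a) (sig_inS _ _ _) (sig_inS _ _ _) h.
  by move/(congr1 (mulmx (e1 F))); rewrite !sig_e1 => /val_inj.
- move=> a x y /(congr1 val); rewrite !val_mulT => h.
  apply: val_inj; move/(congr1 (mulmx^~ (invmx (sigm bt gm (val a))))): h.
  by rewrite !mulmxK // sig_unit // (valP a).
Qed.

Lemma cardT : #|{: LT}| = (#|F| ^ 2 - 1)%N.
Proof.
rewrite card_sig.
have -> : #|[pred x : 'rV[F]_2 | x != 0]| = #|predC1 (0 : 'rV[F]_2)| by apply: eq_card.
by rewrite cardC1 card_mx mul1n subn1.
Qed.


Definition gact (g : {'GL_2[F]}) (x : LT) : LT := insubd x (val x *m GLval g).

Lemma val_gact g x : val (gact g x) = val x *m GLval g.
Proof. by rewrite /gact insubdK //; apply: mul_neq0 (valP x) (GL_unitmx g). Qed.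

Lemma gact_inj g : injective (gact g).
Proof.
move=> x y /(congr1 val); rewrite !val_gact => h; apply: val_inj.
by move/(congr1 (mulmx^~ (invmx (GLval g)))): h; rewrite !mulmxK // GL_unitmx.
Qed.

Definition phi (g : {'GL_2[F]}) : {perm LT} := perm (@gact_inj g).

Lemma phiE g x : phi g x = gact g x.
Proof. by rewrite permE. Qed.

Lemma phiM : {in [set: {'GL_2[F]}] &, {morph phi : g h / (g * h)%g}}.
Proof.
move=> g h _ _; apply/permP => x; rewrite permM !phiE; apply: val_inj.
by rewrite !val_gact mulmxA.
Qed.

Canonical phim : {morphism [set: {'GL_2[F]}] >-> {perm LT}} := Morphism phiM.

Lemma rv2_ne0 (x y : F) : (x != 0) || (y != 0) -> rv2 x y != 0.
Proof.
case/orP => h; apply: contra h => /eqP /rowP; [move/(_ ord0)|move/(_ ord_max)];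
  by rewrite !mxE /= => ->.
Qed.

Lemma phi_inj : ('injm phim)%g.
Proof.
apply/injmP => g h _ _ /= hgh; apply: val_inj.
have hv : forall (v : 'rV[F]_2) (hv : v != 0), v *m GLval g = v *m GLval h.
  move=> v v0; move/permP: hgh => /(_ (exist (fun v : 'rV[F]_2 => v != 0) v v0)); rewrite !phiE.
  by move/(congr1 val); rewrite !val_gact.
have n1 : rv2 (1:F) 0 != 0 by apply: rv2_ne0; rewrite oner_eq0.
have n2 : rv2 (0:F) 1 != 0 by apply: rv2_ne0; rewrite oner_eq0 orbT.
have h1 := hv _ n1; have h2 := hv _ n2.
move: h1 h2; rewrite /= (mk2E (GLval g)) (mk2E (GLval h)) !rv2_mul.
move=> /rowP h1 /rowP h2.
move: (h1 ord0) (h1 ord_max) (h2 ord0) (h2 ord_max); rewrite !mxE /=.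
rewrite !mul1r !mul0r !addr0 !add0r => -> -> -> ->.
by [].
Qed.

Definition Sset : {set {'GL_2[F]}} := [set g : {'GL_2[F]} | inS bt gm (GLval g)].

Lemma rmult_setE : rmult_set mulT = phim @: Sset.
Proof.
apply/setP => s; rewrite inE; apply/existsP/imsetP.
  case=> a /forallP hs; exists (toGL (sigm bt gm (val a))).
    by rewrite inE toGLK ?sig_inS // sig_unit // (valP a).
  apply/permP => x; rewrite (eqP (hs x)) /= phiE; apply: val_inj.
  by rewrite val_mulT val_gact toGLK // sig_unit // (valP a).
case=> g; rewrite inE => hg ->.
have a0 : e1 F *m GLval g != 0 by apply: mul_neq0 e1_neq0 (GL_unitmx g).
exists (exist (fun v : 'rV[F]_2 => v != 0) _ a0); apply/forallP => x; rewrite /= phiE; apply/eqP/val_inj.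
by rewrite val_mulT val_gact /= -(sig_unique hirr hg).
Qed.

Lemma Sset_conj g h : g \in Sset -> (g ^ h)%g \in Sset.
Proof.
rewrite !inE => hg.
have -> : GLval (g ^ h)%g = invmx (GLval h) *m GLval g *m GLval h.
  by rewrite conjgE /= -mulmxA.
exact: inS_conj (GL_unitmx h) hg.
Qed.

Lemma gen_all : (<<Sset>> = [set: {'GL_2[F]}])%g.
Proof.
apply/setP => g; rewrite inE.
apply: (@H_all F bt gm hirr (<<Sset>>%G)) => //.
- by move=> x hx; apply: mem_gen; rewrite inE.
- move=> x y hy; rewrite -(memJ_conjg _ x) in hy.
  rewrite -genJ in hy; apply: subsetP hy; apply: genS.
  apply/subsetP => z; rewrite mem_conjg => hz.
  by rewrite -(conjgKV x z); apply: Sset_conj.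
Qed.

Lemma rccT : rcc mulT.
Proof.
move=> s t; rewrite rmult_setE => /imsetP [g hg ->] /imsetP [h hh ->].
by rewrite -morphJ ?inE //; apply: imset_f; apply: Sset_conj.
Qed.

Lemma isoT : (rmult_group mulT \isog [set: {'GL_2[F]}])%g.
Proof.
rewrite isog_sym /rmult_group /= rmult_setE.
rewrite -morphimEsub ?subsetT // -morphim_gen ?subsetT // gen_all.
exact: sub_isog (subxx _) phi_inj.
Qed.

End Final.

Section Exist.
Variable F : finFieldType.
Hypothesis hF : (2 < #|F|)%N.

Lemma exists_t : exists t : F, t != 0 /\ t != 1.
Proof.
case: (boolP [exists t : F, (t != 0) && (t != 1)]) => [/existsP [t /andP [h1 h2]]|h].
  by exists t.
exfalso; move: hF; apply/negP; rewrite -leqNgt.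
have : [set: F] \subset [set 0; 1].
  apply/subsetP => t _; rewrite !inE; move: h; rewrite negb_exists => /forallP /(_ t).
  by rewrite negb_and !negbK => /orP [->|->]; rewrite ?orbT.
move/subset_leq_card; rewrite cardsT cards2 => /leq_trans; apply.
by case: (_ != _).
Qed.

Lemma exists_gen : exists gm : F, forall z : F, z != 0 -> exists i : nat, z = gm ^+ i.
Proof.
have := field_unit_group_cyclic [set: {unit F}]%G; case/cyclicP => u hu.
exists (val u) => z z0.
have zu : z \is a GRing.unit by rewrite unitfE.
have : (FinRing.unit F zu) \in <[u]>%g by rewrite -hu inE.
case/cycleP => i hi; exists i.
by rewrite -FinRing.val_unitX -hi.
Qed.

Lemma exists_bt (gm : F) : gm != 0 -> exists bt : F, forall x : F, x * x - bt * x + gm != 0.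
Proof.
move=> g0.
case: (boolP [exists bt : F, [forall x : F, x * x - bt * x + gm != 0]]).
  by case/existsP => bt /forallP h; exists bt.
rewrite negb_exists => /forallP h; exfalso.
have : [set: F] \subset [set x + gm / x | x in [set~ 0]].
  apply/subsetP => bt _; move: (h bt); rewrite negb_forall => /existsP [x].
  rewrite negbK => /eqP hx.
  have x0 : x != 0 by apply: contra g0 => /eqP x0; rewrite -hx x0 !mul0r mulr0 subrr add0r.
  apply/imsetP; exists x; first by rewrite !inE.
  have : bt * x = x * x + gm by rewrite -[RHS]subr0 -hx; ring.
  move=> e; apply: (mulIf x0); rewrite e; field; exact x0.
move/subset_leq_card; rewrite cardsT => /leq_trans /(_ (leq_imset_card _ _)).
rewrite cardsC1; have : (0 < #|F|)%N by apply: ltn_trans hF.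
by case: #|F| => // n _; rewrite ltnn.
Qed.

End Exist.


End Aux.
Import Aux.

Theorem proposition7p1 (p k : nat) :
  prime p -> 0 < k -> 2 < p ^ k ->
  exists F : finFieldType, #|F| = p ^ k /\
  exists (T : finType) (mul : T -> T -> T) (e : T),
    [/\ is_loop mul e, #|T| = (p ^ k) ^ 2 - 1, rcc mul &
        (rmult_group mul \isog [set: {'GL_2[F]}])%g].
Proof.
move=> pp k0 hq.
have [F _ hF] := pPrimePowerField pp k0.
exists F; split => //.
have hF2 : (2 < #|F|)%N by rewrite hF.
have [gm hgm] := exists_gen F.
have [t [t0 t1]] := exists_t hF2.
have g1 : gm != 1%R.
  apply/eqP => g1; have [i hi] := hgm t t0; move: t1; rewrite hi g1 expr1n eqxx //.
have g0 : gm != 0%R.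
  apply/eqP => g0; have [i hi] := hgm t t0; move: t0 t1; rewrite hi g0 expr0n.
  by case: (i == 0%N); rewrite ?eqxx.
have [bt hirr] := exists_bt hF2 g0.
have hgen : forall z : F, z != 0%R -> exists l : F, z = (l * l)%R \/ z = (l * l * gm)%R.
  move=> z z0; have [i hi] := hgm z z0; exists (gm ^+ i./2)%R.
  have e : (gm ^+ i = gm ^+ (i./2) * gm ^+ (i./2) * gm ^+ (odd i))%R.
    by rewrite -!exprD addnn addnC odd_double_half.
  by move: e; case: (odd i) => e; [right|left]; rewrite hi e ?expr1 ?expr0 ?mulr1.
exists (LT F), (mulT bt gm), (eT F); split.
- exact: loopT hirr.
- by rewrite cardT hF.
- exact: rccT hirr.
- exact: (isoT hirr (ex_intro _ t (conj t0 t1)) g1 hgen).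
Qed.
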